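(* Let $E$ be a Euclidean space. For closed subsets $V,W$ of $E$ we have $\tau(W\cap V)\geqslant\min\big(\tau(W),\tau(W\cap\partial V)\big)$.
   Context: For nonempty $A\subseteq E$, $d_A(x)=\inf_{p\in A}\|x-p\|$, and $d_\varnothing=+\infty$. For a nonempty closed $A\subseteq E$, the medial axis of $A$ is the closure of $\Delta_A=\{x\in E:\exists p\neq q\in A,\ \|x-p\|=\|x-q\|=d_A(x)\}$; the reach of $A$ at $p\in A$ is $\tau(A,p)=d_{\Delta_A}(p)$, and the reach of $A$ is $\tau(A)=\inf_{p\in A}\tau(A,p)$. By convention $\tau(\varnothing)=+\infty$. $\partial V$ is the topological boundary of $V$ in $E$. *)

(* Defs.v *)
From HB Require Import structures.
From mathcomp Require Import all_boot all_order all_algebra.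
From mathcomp Require Import all_classical all_reals all_analysis.
Set Implicit Arguments. Unset Strict Implicit. Unset Printing Implicit Defensive.
Import Order.TTheory GRing.Theory Num.Theory.
Import numFieldNormedType.Exports.
Local Open Scope classical_set_scope.
Local Open Scope ring_scope.

(* The topology on 'rV[R]_n is the canonical one (induced by
   the max norm), which coincides with the Euclidean topology. *)

Section Reach.
Variables (R : realType) (n : nat).
Local Notation E := 'rV[R]_n.

Definition enorm (x : E) : R := Num.sqrt (\sum_(i < n) (x ord0 i) ^+ 2).
Definition edist (x y : E) : R := enorm (x - y).

(* d_A(x) = inf_{p in A} ||x - p||, with d_emptyset = +oo (ereal_inf set0 = +oo) *)
Definition dist_set (A : set E) (x : E) : \bar R :=
  ereal_inf [set (edist x p)%:E | p in A].

Definition Delta (A : set E) : set E :=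
  [set x | exists p q, [/\ A p, A q, p <> q,
      (edist x p)%:E = dist_set A x & (edist x q)%:E = dist_set A x]].

Definition medial_axis (A : set E) : set E := closure (Delta A).

Definition reach_at (A : set E) (p : E) : \bar R := dist_set (medial_axis A) p.

(* reach of A; reach of the empty set is +oo (ereal_inf set0 = +oo) *)
Definition reach (A : set E) : \bar R := ereal_inf [set reach_at A p | p in A].

Definition boundary (V : set E) : set E := closure V `\` interior V.

End Reach.

(* Main.v *)
Require Import Defs.
From HB Require Import structures.
From mathcomp Require Import all_boot all_order all_algebra.
From mathcomp Require Import all_classical all_reals all_analysis.
From mathcomp Require Import ring lra.
Set Implicit Arguments. Unset Strict Implicit. Unset Printing Implicit Defensive.
Import Order.TTheory GRing.Theory Num.Theory.
Import numFieldNormedType.Exports.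
Local Open Scope classical_set_scope.
Local Open Scope ring_scope.

Lemma lip_cont (R : realType) (V : normedModType R) (f : V -> R) (C : R) :
  0 < C -> (forall x y, `|f x - f y| <= C * `|x - y|) -> continuous f.
Proof.
move=> C0 h x; apply/cvgrPdist_lt => e e0.
have eC : 0 < e / C by rewrite divr_gt0.
near=> y.
apply: le_lt_trans (h x y) _.
rewrite mulrC -ltr_pdivlMr //.
Unshelve. all: by end_near.
Qed.

Section Enorm.
Variables (R : realType) (n : nat).
Local Notation E := 'rV[R]_n.

Definition dot (u v : E) : R := \sum_(i < n) u ord0 i * v ord0 i.

Lemma dot_ge0 (u : E) : 0 <= dot u u.
Proof. by apply: sumr_ge0 => i _; rewrite -expr2 sqr_ge0. Qed.

Lemma enorm_dot (u : E) : enorm u = Num.sqrt (dot u u).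
Proof. by rewrite /enorm /dot; congr Num.sqrt; apply: eq_bigr => i _; rewrite expr2. Qed.

Lemma CS (u v : E) : dot u v ^+ 2 <= dot u u * dot v v.
Proof.
pose F i j := (u ord0 i * v ord0 j - u ord0 j * v ord0 i) ^+ 2.
pose G i j := u ord0 i * u ord0 i * (v ord0 j * v ord0 j).
pose H i j := u ord0 i * v ord0 i * (u ord0 j * v ord0 j).
have E1 : \sum_i \sum_j F i j = \sum_i \sum_j G i j + \sum_i \sum_j G j i
     - (\sum_i \sum_j H i j) *+ 2.
  rewrite -big_split -sumrMnl -sumrB; apply: eq_bigr => i _.
  rewrite -big_split -sumrMnl -sumrB; apply: eq_bigr => j _.
  rewrite /F /G /H /=. ring.
have E2 : \sum_i \sum_j G j i = \sum_i \sum_j G i j by rewrite exchange_big.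
have E3 : \sum_i \sum_j G i j = dot u u * dot v v.
  rewrite /dot mulr_suml; apply: eq_bigr => i _; rewrite mulr_sumr.
  by apply: eq_bigr.
have E4 : \sum_i \sum_j H i j = dot u v ^+ 2.
  rewrite /dot expr2 mulr_suml; apply: eq_bigr => i _; rewrite mulr_sumr.
  by apply: eq_bigr.
have : 0 <= \sum_i \sum_j F i j.
  by apply: sumr_ge0 => i _; apply: sumr_ge0 => j _; exact: sqr_ge0.
rewrite E1 E2 E3 E4 => h.
lra.
Qed.

Lemma dotDl (u v : E) : dot (u + v) (u + v) = dot u u + dot u v *+ 2 + dot v v.
Proof.
rewrite /dot -sumrMnl -!big_split; apply: eq_bigr => i _; rewrite !mxE /=; ring.
Qed.

Lemma enorm_ge0 (u : E) : 0 <= enorm u.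
Proof. exact: sqrtr_ge0. Qed.

Lemma enormD (u v : E) : enorm (u + v) <= enorm u + enorm v.
Proof.
rewrite !enorm_dot.
have hA := dot_ge0 u; have hC := dot_ge0 v.
rewrite -(ger0_norm (addr_ge0 (sqrtr_ge0 (dot u u)) (sqrtr_ge0 (dot v v)))).
rewrite -sqrtr_sqr ler_sqrt ?sqr_ge0 // dotDl.
have hB : dot u v <= Num.sqrt (dot u u) * Num.sqrt (dot v v).
  rewrite -sqrtrM //; apply: le_trans (ler_norm _) _.
  by rewrite -sqrtr_sqr ler_sqrt ?mulr_ge0 // CS.
have h1 := sqr_sqrtr hA; have h2 := sqr_sqrtr hC.
rewrite sqrrD h1 h2. lra.
Qed.

Lemma enormN (u : E) : enorm (- u) = enorm u.
Proof. by rewrite /enorm; congr Num.sqrt; apply: eq_bigr => i _; rewrite mxE sqrrN. Qed.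

Lemma enormZ c (u : E) : enorm (c *: u) = `|c| * enorm u.
Proof.
rewrite /enorm -sqrtr_sqr -sqrtrM ?sqr_ge0 //; congr Num.sqrt.
by rewrite mulr_sumr; apply: eq_bigr => i _; rewrite mxE exprMn.
Qed.

Lemma enorm0 : enorm (0 : E) = 0.
Proof. by rewrite -(scale0r (0:E)) enormZ normr0 mul0r. Qed.

Lemma enorm_coord (u : E) i : `|u ord0 i| <= enorm u.
Proof.
rewrite /enorm -sqrtr_sqr ler_sqrt; last by apply: sumr_ge0 => j _; exact: sqr_ge0.
rewrite (bigD1 i) //= lerDl; apply: sumr_ge0 => j _; exact: sqr_ge0.
Qed.

Lemma enorm_eq0 (u : E) : enorm u = 0 -> u = 0.
Proof.
move=> h; apply/rowP => i; rewrite mxE; apply/eqP; rewrite -normr_eq0.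
by rewrite eq_le normr_ge0 andbT -h enorm_coord.
Qed.

Lemma mxnorm_le_enorm (u : E) : `|u| <= enorm u.
Proof.
rewrite [leLHS]/Num.norm /=.
have [->|/mx_norm_neq0 [[i j] ->]] := eqVneq (mx_norm u) 0; first exact: enorm_ge0.
by rewrite /= (ord1 i); exact: enorm_coord.
Qed.

Lemma coord_le_mxnorm (u : E) i : `|u ord0 i| <= `|u|.
Proof.
have /mapP[j Hj ->] : `|u ord0 i| \in [seq `|u x.1 x.2| | x : 'I_1 * 'I_n].
  by apply/mapP; exists (ord0, i) => //=; rewrite mem_enum.
by rewrite [leRHS]/Num.norm /= mx_normrE; apply/bigmax_geP; right => /=; exists j.
Qed.

Lemma enorm_le_mxnorm (u : E) : enorm u <= n%:R * `|u|.
Proof.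
have h0 : 0 <= n%:R * `|u| by rewrite mulr_ge0.
rewrite -(ger0_norm h0) -sqrtr_sqr ler_sqrt ?sqr_ge0 //.
apply: le_trans (_ : \sum_(i < n) `|u| ^+ 2 <= _).
  apply: ler_sum => i _; rewrite -real_normK ?num_real //.
  by rewrite lerXn2r ?nnegrE ?coord_le_mxnorm.
rewrite sumr_const card_ord exprMn.
have hn : (n%:R : R) <= n%:R ^+ 2.
  by rewrite -natrX ler_nat; case: n => // k; rewrite expnS leq_pmulr.
have ha : 0 <= `|u| ^+ 2 by exact: sqr_ge0.
rewrite -[leLHS]mulr_natr mulrC; exact: ler_wpM2r.
Qed.


Lemma edist_sym (x y : E) : Defs.edist x y = Defs.edist y x.
Proof. by rewrite /Defs.edist -opprB enormN. Qed.

Lemma edist_tri (x y z : E) : Defs.edist x z <= Defs.edist x y + Defs.edist y z.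
Proof.
rewrite /Defs.edist (_ : x - z = (x - y) + (y - z)); first exact: enormD.
by rewrite addrA subrK.
Qed.

Lemma edist_ge0 (x y : E) : 0 <= Defs.edist x y.
Proof. exact: enorm_ge0. Qed.

Lemma edist_xx (x : E) : Defs.edist x x = 0.
Proof. by rewrite /Defs.edist subrr enorm0. Qed.

Lemma edist_eq0 (x y : E) : Defs.edist x y = 0 -> x = y.
Proof. by move=> /enorm_eq0 /eqP; rewrite subr_eq0 => /eqP. Qed.

Lemma edist_le_mx (x y : E) : Defs.edist x y <= n%:R * `|x - y|.
Proof. exact: enorm_le_mxnorm. Qed.

Lemma mx_le_edist (x y : E) : `|x - y| <= Defs.edist x y.
Proof. exact: mxnorm_le_enorm. Qed.

Lemma edist_cont (y : E) : continuous (fun z : E => Defs.edist y z).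
Proof.
apply: (@lip_cont R _ _ (n%:R + 1)); first by rewrite ltr_wpDl.
move=> z w.
have h1 : Defs.edist z w <= (n%:R + 1) * `|z - w|.
  apply: le_trans (edist_le_mx z w) _.
  by rewrite ler_wpM2r // lerDl.
have t1 := edist_tri y z w; have t2 := edist_tri y w z.
rewrite (edist_sym w z) in t2.
apply: le_trans h1.
rewrite ler_norml; apply/andP; split; lra.
Qed.

Lemma ds_le (A : set E) x p : A p -> (dist_set A x <= (Defs.edist x p)%:E)%E.
Proof. by move=> Ap; apply: ereal_inf_lbound; exists p. Qed.

Lemma ds_ge (A : set E) x c : (forall p, A p -> c <= Defs.edist x p) -> (c%:E <= dist_set A x)%E.
Proof. by move=> h; apply: le_ereal_inf_tmp => _ [p Ap <-]; rewrite lee_fin h. Qed.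

Lemma Delta_intro (A : set E) x a b r : A a -> A b -> a <> b ->
  Defs.edist x a = r -> Defs.edist x b = r -> (forall q, A q -> r <= Defs.edist x q) -> Delta A x.
Proof.
move=> Aa Ab ab xa xb lb.
have D : dist_set A x = r%:E.
  by apply/le_anti; rewrite ds_ge // andbT -xa ds_le.
by exists a, b; split => //; rewrite D ?xa ?xb.
Qed.

Lemma Delta_elim (A : set E) x : Delta A x -> exists a b r, [/\ A a, A b, a <> b,
  Defs.edist x a = r & Defs.edist x b = r] /\ forall q, A q -> r <= Defs.edist x q.
Proof.
move=> [a [b [Aa Ab ab xa xb]]]; exists a, b, (Defs.edist x a); split => //.
  by split => //; apply: EFin_inj; rewrite xa xb.
by move=> q Aq; rewrite -lee_fin xa ds_le.
Qed.

Lemma reach_le (A : set E) a y : A a -> Delta A y -> (reach A <= (Defs.edist a y)%:E)%E.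
Proof.
move=> Aa Dy; apply: (@le_trans _ _ (reach_at A a)).
  by apply: ereal_inf_lbound; exists a.
by apply: ds_le; apply: subset_closure.
Qed.

End Enorm.

Section Key.
Variables (R : realType) (n : nat).
Local Notation E := 'rV[R]_n.
Local Notation ed := (@Defs.edist R n).

Lemma closed_edle (y : E) c : closed [set w : E | ed y w <= c].
Proof.
apply: (@preimage_closed _ _ (fun w => ed y w) [set x | x <= c]); last exact: closed_le.
by move=> z _; apply: edist_cont.
Qed.

Lemma closed_edge (a : E) c : closed [set w : E | c <= ed w a].
Proof.
have -> : [set w : E | c <= ed w a] = (fun w => ed a w) @^-1` [set x | c <= x].
  by apply/seteqP; split => w /=; rewrite edist_sym.
apply: preimage_closed; last exact: closed_ge.
by move=> z _; apply: edist_cont.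
Qed.

Lemma key_lemma (W : set E) (a y : E) (s eps : R) : closed W -> W a ->
  ed y a = s -> (forall w, W w -> s <= ed y w) -> (s%:E < reach W)%E ->
  0 < eps ->
  exists2 eta, 0 < eta & forall w, W w -> ed y w < s + eta -> ed w a < eps.
Proof.
move=> Wc Wa ya lb sreach eps0.
case: (pselect (exists2 eta, 0 < eta & forall w, W w -> ed y w < s + eta -> ed w a < eps)) => // H.
have H' : forall eta, 0 < eta -> exists w, [/\ W w, ed y w < s + eta & eps <= ed w a].
  move=> eta eta0; apply: contrapT => H2; apply: H; exists eta => // w Ww hw.
  rewrite ltNge; apply/negP => h; apply: H2; exists w; split => //.
pose K := W `&` [set w | ed y w <= s + 1] `&` [set w | eps <= ed w a].
have Kc : closed K by apply: closedI; [apply: closedI => //; apply: closed_edle | apply: closed_edge].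
have Kb : bounded_set K.
  suff B : \forall M \near +oo, globally K [set x : E | `|x| <= M] by exact: B.
  have hr : `|y| + s + 1 \is Num.real by rewrite num_real.
  apply: filterS (nbhs_pinfty_ge hr) => M hM w [[_ Kw1] _].
  apply: le_trans hM.
  have -> : w = (w - y) + y by rewrite subrK.
  apply: le_trans (ler_normD _ _) _.
  have : `|w - y| <= ed w y by apply: mx_le_edist.
  move: Kw1 => /= Kw1; rewrite edist_sym; lra.
have Kcomp : compact K by apply: bounded_closed_compact.
have [w1 [Ww1 hw1 e1]] := H' 1 ltr01.
have K0 : K !=set0 by exists w1; split => //; split => //; apply: ltW.
have cc : {within K, continuous (fun w => ed y w)}.
  by apply: continuous_subspaceT; exact: edist_cont.
have [c cK cmin] := @compact_EVT_min _ R (fun w => ed y w) K K0 Kcomp cc.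
move: cK; rewrite inE => -[[Wc' cs] ca].
have cle : ed y c <= s.
  apply/ler_addgt0Pr => e e0.
  have em : 0 < Num.min e 1 by rewrite lt_min e0 ltr01.
  have [w [Ww hw ew]] := H' (Num.min e 1) em.
  have wK : K w.
    split => //; split => //; apply: ltW; apply: lt_le_trans hw _.
    by rewrite lerD2l ge_min lexx orbT.
  apply: le_trans (cmin w (mem_set wK)) _; apply: ltW; apply: lt_le_trans hw _.
  by rewrite lerD2l ge_min lexx.
have cs' : ed y c = s by apply/le_anti; rewrite cle lb.
have ca' : a <> c.
  move=> ac; move: ca => /=; rewrite -ac edist_xx => h.
  by move: eps0; rewrite ltNge h.
have D : Delta W y.
  by apply: (@Delta_intro _ _ W y a c s).
have := reach_le Wa D; rewrite edist_sym ya => h.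
by move: sreach; rewrite ltNge h.
Qed.

End Key.

Section Main.
Variables (R : realType) (n : nat).
Local Notation E := 'rV[R]_n.
Local Notation ed := (@Defs.edist R n).

Lemma main_lemma (W V : set E) (x a : E) (r : R) : closed W -> closed V ->
  0 < r -> W a -> V a -> ed x a = r ->
  (forall q, W q -> V q -> r <= ed x q) -> (r%:E < reach W)%E ->
  ~ (forall w, W w -> r <= ed x w) -> boundary V a.
Proof.
move=> Wc Vc r0 Wa Va xa lbA rW notall.
pose y t : E := x + t *: (a - x).
have yd t t' : ed (y t) (y t') = `|t - t'| * r.
  rewrite /Defs.edist; have -> : y t - y t' = (t - t') *: (a - x).
    by rewrite /y opprD addrACA subrr add0r scalerBl.
  by rewrite enormZ -/(ed a x) edist_sym xa.
have y0 : y 0 = x by rewrite /y scale0r addr0.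
have y1 : y 1 = a by rewrite /y scale1r addrC subrK.
pose T := [set t : R | (0 <= t <= 1) /\ forall w, W w -> (1 - t) * r <= ed (y t) w].
have T1 : T 1.
  by split; [rewrite ler01 lexx | move=> w _; rewrite subrr mul0r edist_ge0].
have hinf : has_inf T by split; [exists 1 | exists 0 => t [/andP[]]].
pose ts := inf T.
have ts_lb t : T t -> ts <= t by move=> Tt; apply: ge_inf => //; case: hinf.
have ts0 : 0 <= ts by apply: lb_le_inf; [exists 1 | move=> t [/andP[]]].
have ts1 : ts <= 1 by apply: ts_lb.
have C1 w : W w -> (1 - ts) * r <= ed (y ts) w.
  move=> Ww; apply/ler_addgt0Pr => e e0.
  have e2 : 0 < e / 2 / r by rewrite !divr_gt0.
  have [t Tt tlt] := inf_adherent e2 hinf.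
  have tts : ts <= t by apply: ts_lb.
  case: Tt => /andP[t0 t1] Tt.
  have h1 := Tt w Ww.
  have h2 := edist_tri (y t) (y ts) w.
  rewrite yd ger0_norm ?subr_ge0 // in h2.
  have h3 : (t - ts) * r < e / 2 by rewrite -ltr_pdivlMr // ltrBlDl.
  nra.
clearbody ts.
have tspos : 0 < ts.
  rewrite lt_neqAle ts0 andbT; apply/negP => /eqP ts0'.
  apply: notall => w Ww; have := C1 w Ww.
  by rewrite -ts0' subr0 mul1r y0.
pose s := (1 - ts) * r.
have ya : ed (y ts) a = s.
  by have := yd ts 1; rewrite y1 => ->; rewrite distrC ger0_norm ?subr_ge0.
have sr : (s%:E < reach W)%E.
  apply: le_lt_trans rW; rewrite lee_fin /s; nra.
split; first exact: subset_closure.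
move=> /nbhs_ballP [d d0 hd].
have [eta eta0 H] := key_lemma Wc Wa ya C1 sr d0.
pose dd := Num.min ts (eta / 4 / r).
have dd0 : 0 < dd by rewrite lt_min tspos !divr_gt0.
have ddts : dd <= ts by rewrite ge_min lexx.
have ddr : dd * r <= eta / 4.
  by rewrite -ler_pdivlMr // ge_min lexx orbT.
pose t := ts - dd.
have nT : ~ T t.
  move=> /ts_lb; rewrite /t; lra.
have [w [Ww hw]] : exists w, W w /\ ed (y t) w < (1 - t) * r.
  apply: contrapT => H2; apply: nT; split; first by rewrite /t; apply/andP; split; lra.
  move=> w Ww; rewrite leNgt; apply/negP => hw; apply: H2; exists w; split => //.
have nV : ~ V w.
  move=> Vw; have h1 := lbA w Ww Vw.
  have h2 := edist_tri x (y t) w.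
  have h4 : ed x (y t) = t * r.
    by rewrite -{1}y0 yd sub0r normrN ger0_norm // /t; lra.
  rewrite h4 in h2.
  nra.
apply: nV; apply: hd; rewrite -ball_normE /=.
apply: le_lt_trans (mx_le_edist a w) _; rewrite edist_sym; apply: H => //.
have h2 := edist_tri (y ts) (y t) w.
rewrite yd ger0_norm in h2; last by rewrite /t; lra.
rewrite /s; rewrite /t in h2 hw; nra.
Qed.

End Main.

Section Final.
Variables (R : realType) (n : nat).
Local Notation E := 'rV[R]_n.
Local Notation ed := (@Defs.edist R n).

Lemma final_key (W V : set E) x p : closed W -> closed V ->
  Delta (W `&` V) x -> (W `&` V) p ->
  (Order.min (reach W) (reach (W `&` boundary V)) <= (ed p x)%:E)%E.
Proof.
move=> Wc Vc Dx Ap.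
have [a [b [r [[Aa Ab ab xa xb] lb]]]] := Delta_elim Dx.
apply: (@le_trans _ _ r%:E); last by rewrite lee_fin edist_sym lb.
rewrite leNgt; apply/negP; rewrite lt_min => /andP[rW rB].
have r0 : 0 < r.
  rewrite lt_neqAle -xa edist_ge0 andbT; apply/negP => /eqP h.
  apply: ab; have h1 := edist_eq0 (esym h); rewrite -h1.
  by apply: edist_eq0; rewrite xb -xa; apply: esym.
case: Aa => Wa Va; case: Ab => Wb Vb.
case: (pselect (forall w, W w -> r <= ed x w)) => [hall|notall].
  have D : Delta W x by apply: (@Delta_intro _ _ W x a b r).
  have := reach_le Wa D; rewrite edist_sym xa => h.
  by move: rW; rewrite ltNge h.
have lbA q : W q -> V q -> r <= ed x q by move=> Wq Vq; apply: lb.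
have ba := main_lemma Wc Vc r0 Wa Va xa lbA rW notall.
have bb := main_lemma Wc Vc r0 Wb Vb xb lbA rW notall.
have cV : closure V = V by rewrite -(closure_id V).1.
have D : Delta (W `&` boundary V) x.
  apply: (@Delta_intro _ _ _ x a b r) => //.
  move=> q [Wq [cq _]]; apply: lbA => //; by rewrite -cV.
have := reach_le (conj Wa ba) D; rewrite edist_sym xa => h.
by move: rB; rewrite ltNge h.
Qed.

Lemma closure_approx (S : set E) z e : closure S z -> 0 < e ->
  exists x, S x /\ ed z x < e.
Proof.
move=> cz e0.
have d0 : 0 < e / (n%:R + 1) by rewrite divr_gt0 // ltr_wpDl.
have [x [Sx bx]] := cz _ (nbhsx_ballx (z : E) _ d0).
exists x; split => //.
move: bx; rewrite -ball_normE /= => bx.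
apply: le_lt_trans (edist_le_mx z x) _.
apply: le_lt_trans (_ : (n%:R + 1) * `|z - x| < e); last first.
  by rewrite mulrC -ltr_pdivlMr // ltr_wpDl.
by rewrite ler_wpM2r // lerDl.
Qed.

Lemma ereal_closure_bound (S : set E) (m : \bar R) p z : closure S z ->
  (forall x, S x -> (m <= (ed p x)%:E)%E) -> (m <= (ed p z)%:E)%E.
Proof.
move=> cz h; case: m h => [m0| |] h //; last by rewrite leNye.
  rewrite lee_fin; apply/ler_addgt0Pr => e e0.
  have [x [Sx zx]] := closure_approx cz e0.
  have := h x Sx; rewrite lee_fin => h1.
  have := edist_tri p z x; lra.
have [x [Sx _]] := closure_approx cz ltr01.
by have := h x Sx.
Qed.

End Final.

Unset Implicit Arguments.

Theorem theorem2p4 (R : realType) (n : nat) (V W : set 'rV[R]_n) :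
  closed V -> closed W ->
  (Order.min (reach W) (reach (W `&` boundary V)) <= reach (W `&` V))%E.
Proof.
move=> Vc Wc.
apply: le_ereal_inf_tmp => _ [p Ap <-].
apply: le_ereal_inf_tmp => _ [z cz <-].
apply: (ereal_closure_bound cz) => x Dx.
exact: final_key.
Qed.
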